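(* Let $h,v$ be permutations of $\Lambda=\{1,\dots,d\}$, $M\ge0$ an integer, and let $(\mu_n,\sigma_n)_{n\in\mathbb{Z}}\in(\Lambda\times\{L,R\})^{\mathbb{Z}}$ be a walk on $\Gamma^M$. Then for every finite word $w$ occurring in $(\mu_n,\sigma_n)$, the sets $A(w)$ and $D(w)$ each contain at most two letters, $A(w)$ is a $\pi_1^M$-interval, and $D(w)$ is a $\pi_0$-interval.
   Context: $\Gamma^M$ is the directed multigraph on vertex set $\Lambda$ where each vertex $\lambda$ has an edge labeled $L$ to $vh^M(\lambda)$ and an edge labeled $R$ to $vh^{M+1}(\lambda)$; a walk on $\Gamma^M$ is a sequence $(\mu_n,\sigma_n)$ with $\mu_{n+1}=vh^M(\mu_n)$ if $\sigma_n=L$ and $\mu_{n+1}=vh^{M+1}(\mu_n)$ if $\sigma_n=R$. For a finite word $w$ occurring in the sequence, $A(w)$ is the set of letters $a\in\Lambda\times\{L,R\}$ such that $aw$ occurs, and $D(w)$ the set of letters $b$ such that $wb$ occurs. $\pi_0,\pi_1^M:\Lambda\times\{L,R\}\to\{1,\dots,2d\}$ are $\pi_0(\lambda,L)=2\lambda-1$, $\pi_0(\lambda,R)=2\lambda$, $\pi_1^M(\lambda,L)=2vh^M(\lambda)$, $\pi_1^M(\lambda,R)=2vh^{M+1}(\lambda)-1$. For a bijection $\pi$, a $\pi$-interval is a set of letters whose $\pi$-values form a set of consecutive integers. *)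

(* Defs.v *)
From mathcomp Require Import all_boot all_order all_algebra all_fingroup.
Set Implicit Arguments. Unset Strict Implicit. Unset Printing Implicit Defensive.

(* Lambda = {1,...,d} is represented by 'I_d, element i : 'I_d standing for i+1. *)
Inductive LR := L | R.

Definition letter (d : nat) : Type := ('I_d * LR)%type.

Definition vh (d : nat) (h v : {perm 'I_d}) (k : nat) (l : 'I_d) : 'I_d :=
  v ((h ^+ k)%g l).

Definition is_walk (d : nat) (h v : {perm 'I_d}) (M : nat) (x : int -> letter d) :=
  forall n : int,
    (x (n + 1)%R).1 = (if (x n).2 is L then vh h v M (x n).1 else vh h v M.+1 (x n).1).

Definition occurs (d : nat) (x : int -> letter d) (w : seq (letter d)) : Prop :=
  exists n : int, [seq x (n + i%:Z)%R | i <- iota 0 (size w)] = w.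

Definition Aset (d : nat) (x : int -> letter d) (w : seq (letter d)) (a : letter d) : Prop :=
  occurs x (a :: w).
Definition Dset (d : nat) (x : int -> letter d) (w : seq (letter d)) (b : letter d) : Prop :=
  occurs x (rcons w b).

(* pi_0 and pi_1^M, with values in {1,...,2d}; lambda = i+1 for i : 'I_d. *)
Definition pi0 (d : nat) (a : letter d) : nat :=
  match a with
  | (l, L) => 2 * l.+1 - 1
  | (l, R) => 2 * l.+1
  end.
Definition pi1 (d : nat) (h v : {perm 'I_d}) (M : nat) (a : letter d) : nat :=
  match a with
  | (l, L) => 2 * (vh h v M l).+1
  | (l, R) => 2 * (vh h v M.+1 l).+1 - 1
  end.

Definition pi_interval (d : nat) (pi : letter d -> nat) (P : letter d -> Prop) : Prop :=
  forall a b, P a -> P b -> forall k, pi a <= k <= pi b -> exists c, P c /\ pi c = k.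

Definition at_most_two (d : nat) (P : letter d -> Prop) : Prop :=
  exists a b : letter d, forall c, P c -> c = a \/ c = b.

(* Main.v *)
Require Import Defs.
From mathcomp Require Import all_boot all_order all_algebra all_fingroup.
From mathcomp Require Import zify.
Import GRing.Theory.
Set Implicit Arguments. Unset Strict Implicit. Unset Printing Implicit Defensive.

Definition stepF (d : nat) (h v : {perm 'I_d}) (M : nat) (c : letter d) : 'I_d :=
  if c.2 is L then vh h v M c.1 else vh h v M.+1 c.1.

Lemma interval2 (d : nat) (P : letter d -> Prop) (pi : letter d -> nat) (N : nat) :
  (forall c, P c -> pi c = N \/ pi c = N.+1) -> pi_interval pi P.
Proof.
move=> H a b Pa Pb k /andP[h1 h2].
have [ea|ea] := H a Pa; have [eb|eb] := H b Pb.
- by exists a; split => //; lia.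
- have [->|ne] := eqVneq k N; first by exists a; rewrite ea.
  by exists b; split => //; lia.
- lia.
- by exists a; split => //; lia.
Qed.

Lemma nth_occ (d : nat) (x : int -> letter d) (n : int) (m i : nat) (s : seq (letter d)) z :
  [seq x (n + j%:Z)%R | j <- iota 0 m] = s -> i < m -> nth z s i = x (n + i%:Z)%R.
Proof. by move=> <- lt; rewrite (nth_map 0) ?size_iota // nth_iota. Qed.

Lemma vhE (d : nat) (h v : {perm 'I_d}) k l : vh h v k l = ((h ^+ k) * v)%g l.
Proof. by rewrite /vh permM. Qed.

Lemma vh_inv (d : nat) (h v : {perm 'I_d}) k l m : vh h v k l = m -> l = (((h ^+ k) * v)^-1)%g m.
Proof. by rewrite vhE => <-; rewrite permK. Qed.

Theorem lemma5p4 (d : nat) (h v : {perm 'I_d}) (M : nat) (x : int -> letter d) :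
  is_walk h v M x ->
  forall w : seq (letter d), w <> [::] -> occurs x w ->
    [/\ at_most_two (Aset x w), at_most_two (Dset x w),
        pi_interval (pi1 h v M) (Aset x w) & pi_interval (@pi0 d) (Dset x w)].
Proof.
move=> Hw w wn _.
case: w wn => [//|w0 w'] _.
have HA : forall a, Aset x (w0 :: w') a -> stepF h v M a = w0.1.
  move=> a [n E].
  have e0 := nth_occ w0 E (isT : 0 < (size (a :: w0 :: w')))%N.
  have e1 := nth_occ w0 E (isT : 1 < (size (a :: w0 :: w')))%N.
  rewrite /= addr0 in e0 e1.
  by rewrite e0 e1 Hw /stepF.
set l := last w0 w'.
have HD : forall b, Dset x (w0 :: w') b -> b.1 = stepF h v M l.
  move=> b [n E].
  have s1 : (size w').+1 < size (rcons (w0 :: w') b) by rewrite size_rcons /=.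
  have e1 := nth_occ w0 E s1.
  have e0 := nth_occ w0 E (ltn_trans (ltnSn _) s1).
  rewrite nth_rcons /= ltnn eqxx in e1.
  rewrite nth_rcons /= ltnSn -last_nth in e0.
  rewrite e1 /l e0.
  have -> : (n + (size w').+1%:Z = (n + (size w')%:Z) + 1)%R.
    by rewrite -addrA; congr (_ + _)%R; rewrite -addn1 PoszD.
  by rewrite Hw /stepF.
split.
- exists ((((h ^+ M) * v)^-1)%g w0.1, L), ((((h ^+ M.+1) * v)^-1)%g w0.1, R).
  move=> [c s] /HA; rewrite /stepF /=; case: s => /vh_inv ->; by [left|right].
- exists (stepF h v M l, L), (stepF h v M l, R).
  move=> [c s] /HD /= ->; case: s; by [left|right].
- apply: (interval2 (N := (2 * w0.1).+1%N)) => -[c s] /HA; rewrite /stepF /pi1 /=.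
  case: s => ->.
  - by right; rewrite mulnS.
  - by left; rewrite mulnS.
- apply: (interval2 (N := (2 * (stepF h v M l)).+1%N)) => -[c s] /HD /= ->.
  case: s => /=.
  - by left; rewrite mulnS.
  - by right; rewrite mulnS.
Qed.
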